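(* For every choice of the distributions $P(\cdot\mid x)$, every choice of regressors $r_{v,i}:X\to[0,1]$ ($v$ internal, $2\le i\le k$), and every pair $(x,y)\in X\times Y$, $$\bigl(Q(y\mid x)-P(y\mid x)\bigr)^2\;\le\;4\,m^2\Bigl(\frac{k-1}{k}\Bigr)^2\varepsilon^2,\qquad m=\log_k n,$$ where $\varepsilon^2=\frac{1}{(k-1)m}\sum_{v\in\mathrm{path}(y)}\sum_{i=2}^{k}\bigl(r_{v,i}(x)-P_v(Y_{v,i}\mid x)\bigr)^2$ is the average squared error of the $(k-1)m$ non-trivial regressors at the nodes on the path to $y$.
   Context: Let $X$ be an arbitrary set and $Y=\{1,\dots,n\}$. For each $x\in X$, $P(\cdot\mid x)$ is a probability distribution on $Y$; for $S\subseteq Y$ write $P(S\mid x)=\sum_{y\in S}P(y\mid x)$. The $0/1$ matrices $C_{2^t}$ are defined recursively by $C_2=\begin{bmatrix}1&1\\1&0\end{bmatrix}$ and $C_{2s}=\begin{bmatrix}C_s&C_s\\ C_s&J-C_s\end{bmatrix}$, where $J$ is the all-ones $s\times s$ matrix; row $1$ of each $C_{2^t}$ is all ones. Let $k\ge 2$ be a power of $2$ and $n=k^m$ for an integer $m\ge1$. Fix a complete $k$-ary rooted tree of depth $m$ whose $n$ leaves are in one-to-one correspondence with $Y$; each internal node $v$ has children $c_1,\dots,c_k$, and $T(u)\subseteq Y$ denotes the set of labels in the subtree rooted at $u$. For a label $y$, $\mathrm{path}(y)$ is the set of internal nodes on the root-to-$y$ path, and for $v\in\mathrm{path}(y)$,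 $j_v(y)$ is the index of the child of $v$ whose subtree contains $y$. For internal $v$, $P_v(c_j\mid x)=P(T(c_j)\mid x)/P(T(v)\mid x)$ when $P(T(v)\mid x)>0$ (an arbitrary probability distribution on the children otherwise), and for a set $S$ of children $P_v(S\mid x)=\sum_{c\in S}P_v(c\mid x)$. For $i\in\{1,\dots,k\}$, $Y_{v,i}=\{c_j: C_k(i,j)=1\}$. At each internal node $v$ there are $k-1$ regressors $r_{v,i}:X\to[0,1]$, $i=2,\dots,k$, and we set $r_{v,1}\equiv1$. The node estimate is $Q_v(c_j\mid x)=2\cdot\frac1k\sum_{i=1}^k\bigl[C_k(i,j)r_{v,i}(x)+(1-C_k(i,j))(1-r_{v,i}(x))\bigr]-1$, and the overall estimate is $Q(y\mid x)=\prod_{v\in\mathrm{path}(y)}Q_v(c_{j_v(y)}\mid x)$. *)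

(* Defs.v *)
From HB Require Import structures.
From mathcomp Require Import all_boot all_order all_algebra.
Set Implicit Arguments. Unset Strict Implicit. Unset Printing Implicit Defensive.
Import Order.TTheory GRing.Theory Num.Theory.
Local Open Scope ring_scope.

(* The 0/1 matrix C_{2^t}, 0-indexed: Cmat t i j = C_{2^t}(i+1, j+1).
   C_1 = [1]; C_{2s} = [[C_s, C_s],[C_s, J - C_s]] (so C_2 = [[1,1],[1,0]]). *)
Fixpoint Cmat (t : nat) (i j : nat) : bool :=
  match t with
  | 0 => true
  | t'.+1 =>
      let s := (2 ^ t')%N in
      xorb (Cmat t' (i %% s) (j %% s)) ((s <= i)%N && (s <= j)%N)
  end.

Section Tree.
Variables (R : realFieldType) (X : Type) (t m n : nat).
Notation k := (2 ^ t)%N.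
(* Leaf labelling: label y corresponds to the leaf reached by the sequence of
   child indices lab y (a word of length m over 'I_k).  Internal nodes are the
   prefixes v : seq 'I_k of size < m; the children of v are rcons v j. *)
Variable lab : 'I_n -> m.-tuple 'I_k.

Definition subtree (v : seq 'I_k) : pred 'I_n :=
  fun y => take (size v) (lab y) == v.

Definition PS (P : X -> 'I_n -> R) (x : X) (S : pred 'I_n) : R :=
  \sum_(y | S y) P x y.

(* P_v(c_j | x); D v x is the arbitrary distribution used when P(T(v)|x) = 0 *)
Definition Pv (P : X -> 'I_n -> R) (D : seq 'I_k -> X -> 'I_k -> R)
    (x : X) (v : seq 'I_k) (j : 'I_k) : R :=
  let tv := PS P x (subtree v) in
  if 0 < tv then PS P x (subtree (rcons v j)) / tv else D v x j.

Definition PvS P D x v (S : pred 'I_k) : R := \sum_(j | S j) Pv P D x v j.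

Definition Yset (i : 'I_k) : pred 'I_k := fun j => Cmat t i j.

(* r_{v,1} := 1 (index 0 here), the others are the given regressors *)
Definition reg (r : seq 'I_k -> 'I_k -> X -> R) v (i : 'I_k) x : R :=
  if (i : nat) == 0%N then 1 else r v i x.

Definition Qv r x v (j : 'I_k) : R :=
  2 * (1 / k%:R) * \sum_(i < k)
      (if Cmat t i j then reg r v i x else 1 - reg r v i x) - 1.

Definition Q r x (y : 'I_n) : R :=
  \prod_(d < m) Qv r x (take d (lab y)) (tnth (lab y) d).

Definition eps2 r P D x (y : 'I_n) : R :=
  (1 / ((k%:R - 1) * m%:R)) *
  \sum_(d < m) \sum_(i < k | (i : nat) != 0%N)
     (r (take d (lab y)) i x - PvS P D x (take d (lab y)) (Yset i)) ^+ 2.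

End Tree.

(* Main.v *)
Require Import Defs.
From HB Require Import structures.
From mathcomp Require Import all_boot all_order all_algebra.
Import Order.TTheory GRing.Theory Num.Theory.
Local Open Scope ring_scope.

Open Scope nat_scope.
Lemma Cmat0 t j : Cmat t 0 j.
Proof. by elim: t j => //= t IH j; rewrite mod0n IH leqn0 expn_eq0. Qed.

Definition agree t j l : nat := \sum_(0 <= i < 2 ^ t) (Cmat t i j == Cmat t i l).

Lemma agree_le t j l : (agree t j l <= 2 ^ t)%N.
Proof.
rewrite /agree -{2}(subn0 (2 ^ t)) -(muln1 (2 ^ t - 0)) -sum_nat_const_nat.
by apply: leq_sum => i _; case: (_ == _).
Qed.

Lemma agreeE t j l : (j < 2 ^ t)%N -> (l < 2 ^ t)%N ->
  ((agree t j l).*2 = if j == l then (2 ^ t).*2 else 2 ^ t)%N.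
Proof.
elim: t j l => [|t IH] j l.
  by rewrite expn0 !ltnS !leqn0 => /eqP -> /eqP ->; rewrite /agree big_nat1.
set s := (2 ^ t)%N.
have s0 : (0 < s)%N by rewrite expn_gt0.
have e2 : (2 ^ t.+1 = s + s)%N by rewrite expnS mul2n -addnn.
move=> hj hl.
rewrite /agree e2 (big_cat_nat _ (n:=s)) ?leq_addr //.
rewrite -{2}[s]add0n big_addn addnK.
have E1 : \sum_(0 <= i < s) (Cmat t.+1 i j == Cmat t.+1 i l)
          = agree t (j %% s) (l %% s).
  rewrite /agree; apply: eq_big_nat => i /andP[_ hi] /=.
  by rewrite -/s (modn_small hi) !(leqNgt s i) hi /=; case: (Cmat _ _ _); case: (Cmat _ _ _).
have E2 : \sum_(0 <= i < s) (Cmat t.+1 (i + s) j == Cmat t.+1 (i + s) l)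
   = \sum_(0 <= i < s) (if (s <= j) == (s <= l)
        then (Cmat t i (j %% s) == Cmat t i (l %% s)) : nat
        else ~~ (Cmat t i (j %% s) == Cmat t i (l %% s))).
  apply: eq_big_nat => i /andP[_ hi] /=.
  rewrite -/s modnDr (modn_small hi) leq_addl /=.
  by case: (Cmat t i _); case: (Cmat t i _); case: (s <= j)%N; case: (s <= l)%N.
rewrite E1 E2.
have hj0 := ltn_pmod j s0; have hl0 := ltn_pmod l s0.
have split2 z : (z < s + s -> z = z %% s + s * (s <= z))%N.
  move=> hz; case: leqP => h; first last.
    by rewrite muln0 addn0 modn_small.
  rewrite muln1 -[z in z %% s](subnK h) modnDr modn_small ?subnK //.
  by rewrite -(ltn_add2r s) subnK.
have Hj : j = (j %% s + s * (s <= j))%N.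
  move: hj; rewrite e2.
  exact: split2.
have Hl : l = (l %% s + s * (s <= l))%N.
  move: hl; rewrite e2.
  exact: split2.
case: eqP => hb.
  rewrite big_mkcond /=. 
  have -> : \sum_(0 <= i < s) (if true then (Cmat t i (j %% s) == Cmat t i (l %% s)) : nat else 0%N)
     = agree t (j %% s) (l %% s) by [].
  rewrite addnn doubleD (IH _ _ hj0 hl0).
  have -> : (j == l) = (j %% s == l %% s).
    apply/eqP/eqP => [-> //| h]; by rewrite Hj Hl h hb.
  case: ifP => _; first by rewrite -!addnn.
  by rewrite addnn.
have -> : (j == l) = false.
  by apply/eqP => h; apply: hb; rewrite h.
have -> : \sum_(0 <= i < s) (~~ (Cmat t i (j %% s) == Cmat t i (l %% s)) : nat)
   = (s - agree t (j %% s) (l %% s))%N.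
  apply/eqP; rewrite -(eqn_add2r (agree t (j %% s) (l %% s))) subnK ?agree_le //.
  rewrite /agree -big_split /=.
  rewrite (eq_bigr (fun _ => 1%N)) ?sum_nat_const_nat ?subn0 ?muln1 //.
  by move=> i _; rewrite addn_negb.
by rewrite /= subnKC ?agree_le // addnn.
Qed.

Close Scope nat_scope.

Lemma node_id (R : realFieldType) t (p : 'I_(2 ^ t) -> R)
  (hp1 : \sum_j p j = 1) (j : 'I_(2 ^ t)) :
  2 * (1 / (2 ^ t)%:R) * \sum_(i < 2 ^ t)
    (if Cmat t i j then \sum_(l : 'I_(2 ^ t) | Cmat t i l) p l
     else 1 - \sum_(l : 'I_(2 ^ t) | Cmat t i l) p l) - 1 = p j.
Proof.
set k := (2 ^ t)%N.
have k0 : (k%:R : R) != 0 by rewrite pnatr_eq0 expn_eq0.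
have st1 (i : 'I_(2 ^ t)) : (if Cmat t i j then \sum_(l : 'I_(2 ^ t) | Cmat t i l) p l
     else 1 - \sum_(l : 'I_(2 ^ t) | Cmat t i l) p l)
   = \sum_l p l * (Cmat t i j == Cmat t i l : nat)%:R.
  have -> : 1 - \sum_(l : 'I_(2 ^ t) | Cmat t i l) p l = \sum_(l : 'I_(2 ^ t) | ~~ Cmat t i l) p l.
    by rewrite -hp1 (bigID (fun l : 'I_(2 ^ t) => Cmat t i l)) /= addrC addrK.
  rewrite [RHS](bigID (fun l : 'I_(2 ^ t) => Cmat t i l)) /=.
  case: (Cmat t i j).
    rewrite [X in _ + X]big1 ?addr0; last by move=> l /negbTE ->; rewrite mulr0.
    by apply: eq_bigr => l ->; rewrite mulr1.
  rewrite [X in X + _]big1 ?add0r; last by move=> l ->; rewrite mulr0.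
  by apply: eq_bigr => l /negbTE ->; rewrite mulr1.
rewrite (eq_bigr _ (fun i _ => st1 i)) exchange_big /=.
have st2 l : \sum_(i < k) p l * (Cmat t i j == Cmat t i l : nat)%:R
   = p l * (agree t j l)%:R.
  by rewrite -mulr_sumr -natr_sum /agree big_mkord.
rewrite (eq_bigr _ (fun l _ => st2 l)).
have st3 : 2 * \sum_l p l * (agree t j l)%:R = k%:R + k%:R * p j.
  rewrite mulr_sumr.
  have st l : 2 * (p l * (agree t j l)%:R) = k%:R * p l + (if l == j then k%:R * p l else 0).
    rewrite mulrCA -natrM mul2n agreeE //.
    case: (eqVneq l j) => [->|hne].
      by rewrite eqxx -addnn natrD mulrDr [_ * k%:R]mulrC.
    have -> : ((j : nat) == l) = false by apply/negbTE; rewrite eq_sym.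
    by rewrite addr0 mulrC.
  rewrite (eq_bigr _ (fun l _ => st l)) big_split /= -mulr_sumr hp1 mulr1.
  by rewrite -big_mkcond /= big_pred1_eq.
rewrite mulrAC st3 mul1r mulrDl mulfV // [k%:R * _]mulrC -mulrA mulfV // mulr1.
by rewrite addrC addKr.
Qed.

Lemma node_err (R : realFieldType) t (p g : 'I_(2 ^ t) -> R)
  (hp1 : \sum_j p j = 1) (hg : forall i : 'I_(2 ^ t), (i : nat) = 0%N -> g i = 1)
  (j : 'I_(2 ^ t)) :
  `| 2 * (1 / (2 ^ t)%:R) * \sum_(i < 2 ^ t)
    (if Cmat t i j then g i else 1 - g i) - 1 - p j |
  <= 2 * (1 / (2 ^ t)%:R) * \sum_(i < 2 ^ t | (i : nat) != 0%N)
        `| g i - \sum_(l : 'I_(2 ^ t) | Cmat t i l) p l |.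
Proof.
rewrite -{1}(node_id _ _ _ hp1 j) opprB addrA subrK -mulrBr -sumrB normrM.
have c0 : 0 <= 2 * (1 / (2 ^ t)%:R) :> R by rewrite mulr_ge0 // divr_ge0.
rewrite (ger0_norm c0); apply: ler_wpM2l => //.
apply: le_trans (ler_norm_sum _ _ _) _.
rewrite [X in _ <= X]big_mkcond /=; apply: ler_sum => i _.
case: (boolP ((i : nat) != 0%N)) => hi.
  case: (Cmat t i j) => //.
  by rewrite opprB addrC addrA subrK distrC.
move/negbNE/eqP: hi => hi.
rewrite hg //.
have -> : \sum_(l : 'I_(2 ^ t) | Cmat t i l) p l = 1.
  by rewrite -hp1; apply: eq_bigl => l; rewrite hi Cmat0.
by rewrite hi Cmat0 subrr normr0.
Qed.

Lemma q_bound (R : realFieldType) t (g : 'I_(2 ^ t) -> R)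
  (hg : forall i, 0 <= g i <= 1) (j : 'I_(2 ^ t)) :
  `| 2 * (1 / (2 ^ t)%:R) * \sum_(i < 2 ^ t)
    (if Cmat t i j then g i else 1 - g i) - 1 | <= 1.
Proof.
set S := \sum_(i < _) _.
have S0 : 0 <= S.
  apply: sumr_ge0 => i _; have /andP[h0 h1] := hg i.
  by case: ifP => _ //; rewrite subr_ge0.
have S1 : S <= (2 ^ t)%:R.
  have -> : ((2 ^ t)%:R : R) = \sum_(i < 2 ^ t) 1.
    by rewrite sumr_const card_ord.
  apply: ler_sum => i _; have /andP[h0 h1] := hg i.
  by case: ifP => _ //; rewrite lerBlDr lerDl.
have k0 : 0 < ((2 ^ t)%:R : R) by rewrite ltr0n expn_gt0.
rewrite ler_norml; apply/andP; split.
  rewrite lerBrDr addrC subrr mulr_ge0 // mulr_ge0 // divr_ge0 //.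
rewrite lerBlDr; apply: (le_trans (y := 2 * (1 / (2 ^ t)%:R) * (2 ^ t)%:R)).
  by apply: ler_wpM2l => //; rewrite mulr_ge0 // divr_ge0.
by rewrite -mulrA mul1r mulVf ?mulr1 ?gt_eqF // -mulr2n.
Qed.

Lemma prod_diff (R : realFieldType) (I : Type) (s : seq I) (a b : I -> R)
  (ha : forall i, `|a i| <= 1) (hb : forall i, `|b i| <= 1) :
  `| \prod_(i <- s) a i - \prod_(i <- s) b i | <= \sum_(i <- s) `|a i - b i|.
Proof.
elim: s => [|i s IH]; first by rewrite !big_nil subrr normr0.
rewrite !big_cons.
have -> : a i * \prod_(j <- s) a j - b i * \prod_(j <- s) b j
   = (a i - b i) * \prod_(j <- s) a j + b i * (\prod_(j <- s) a j - \prod_(j <- s) b j).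
  by rewrite mulrBl mulrBr addrA subrK.
apply: le_trans (ler_normD _ _) _; rewrite !normrM; apply: lerD.
  rewrite -[X in _ <= X]mulr1; apply: ler_wpM2l => //.
  by rewrite normr_prod; apply: prodr_ile1 => j _; rewrite normr_ge0 ha.
rewrite -[X in _ <= X]mul1r; apply: ler_pM => //.
Qed.

Lemma cs (R : realFieldType) (I : finType) (A : pred I) (a : I -> R) :
  (\sum_(i | A i) a i) ^+ 2 <= (\sum_(i | A i) 1) * \sum_(i | A i) a i ^+ 2.
Proof.
have key : 2 * (\sum_(i | A i) a i) ^+ 2
   <= 2 * ((\sum_(i | A i) 1) * \sum_(i | A i) a i ^+ 2).
  have E : 2 * ((\sum_(i | A i) 1) * \sum_(i | A i) a i ^+ 2)
    = \sum_(i | A i) \sum_(j | A j) (a i ^+ 2 + a j ^+ 2).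
    set c := \sum_(i | A i) (1 : R); set S := \sum_(i | A i) a i ^+ 2.
    have -> : \sum_(i | A i) \sum_(j | A j) (a i ^+ 2 + a j ^+ 2)
       = \sum_(i | A i) (a i ^+ 2 * c + 1 * S).
      apply: eq_bigr => i _; rewrite big_split /= mulr_sumr mul1r.
      by congr (_ + _); apply: eq_bigr => j _; rewrite mulr1.
    rewrite big_split /= -!mulr_suml -/S -/c mulrC.
    by rewrite [S * c]mulrC -mulr2n mulr_natr.
  rewrite E expr2 mulr_suml mulr_sumr; apply: ler_sum => i _.
  rewrite mulr_sumr mulr_sumr; apply: ler_sum => j _.
  rewrite -subr_ge0; have := sqr_ge0 (a i - a j).
  by rewrite sqrrB mulr_natl addrAC.
by rewrite ler_pM2l in key.
Qed.

Lemma k_gt0 t : (0 < 2 ^ t)%N. Proof. by rewrite expn_gt0. Qed.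

Section TreeLemmas.
Variables (R : realFieldType) (X : Type) (t m n : nat).
Variable lab : 'I_n -> m.-tuple 'I_(2 ^ t).
Variable P : X -> 'I_n -> R.
Hypothesis hP0 : forall x y, 0 <= P x y.
Let x0 : 'I_(2 ^ t) := Ordinal (k_gt0 t).

Lemma PS_ge0 x S : 0 <= PS P x S.
Proof. by apply: sumr_ge0 => y _. Qed.

Lemma subtree_rcons v j y' : (size v < m)%N ->
  subtree lab (rcons v j) y' = subtree lab v y' && (nth x0 (lab y') (size v) == j).
Proof.
move=> hv; rewrite /subtree size_rcons (take_nth x0) ?size_tuple //.
by rewrite eqseq_rcons.
Qed.

Lemma children_sum v x : (size v < m)%N ->
  \sum_(j < 2 ^ t) PS P x (subtree lab (rcons v j)) = PS P x (subtree lab v).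
Proof.
move=> hv; rewrite /PS.
under eq_bigr => j _ do rewrite (eq_bigl _ _ (fun y' => subtree_rcons v j y' hv)).
symmetry; exact: (partition_big (fun y' => nth x0 (lab y') (size v)) predT).
Qed.

Variable D : seq 'I_(2 ^ t) -> X -> 'I_(2 ^ t) -> R.
Hypothesis hD0 : forall v x j, (size v < m)%N -> 0 <= D v x j.
Hypothesis hD1 : forall v x, (size v < m)%N -> \sum_(j < 2 ^ t) D v x j = 1.

Lemma Pv_ge0 x v j : (size v < m)%N -> 0 <= Pv lab P D x v j.
Proof.
move=> hv; rewrite /Pv; case: ifP => h; last exact: hD0.
by rewrite divr_ge0 ?PS_ge0 // ltW.
Qed.

Lemma Pv_sum1 x v : (size v < m)%N -> \sum_j Pv lab P D x v j = 1.
Proof.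
move=> hv; case: (boolP (0 < PS P x (subtree lab v))) => h.
  rewrite (eq_bigr (fun j => PS P x (subtree lab (rcons v j)) / PS P x (subtree lab v))); last by move=> j _; rewrite /Pv h.
  by rewrite -mulr_suml children_sum // mulfV // gt_eqF.
rewrite (eq_bigr (fun j => D v x j)); last by move=> j _; rewrite /Pv (negbTE h).
exact: hD1.
Qed.

Lemma Pv_le1 x v j : (size v < m)%N -> Pv lab P D x v j <= 1.
Proof.
move=> hv; rewrite -(Pv_sum1 x v hv) (bigD1 j) //= lerDl.
by apply: sumr_ge0 => i _; apply: Pv_ge0.
Qed.

Hypothesis hP1 : forall x, \sum_(y < n) P x y = 1.
Hypothesis hlab : injective lab.

Lemma telescope x y e : (e <= m)%N ->
  \prod_(0 <= d < e) Pv lab P D x (take d (lab y)) (nth x0 (lab y) d)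
  = PS P x (subtree lab (take e (lab y))).
Proof.
elim: e => [_|e IH he].
  rewrite big_nil /PS -(hP1 x); apply: eq_bigl => y'.
  by rewrite /subtree take0 /= take0.
have he' : (e < size (lab y))%N by rewrite size_tuple.
have sz : size (take e (lab y)) = e by rewrite size_takel // ltnW.
rewrite big_nat_recr // IH; last exact: ltnW.
rewrite /Pv (take_nth x0 he').
match goal with |- _ ?a ?b = ?c => change (a * b = c) end.
case: ifP => h; first by rewrite mulrC divfK // gt_eqF.
have h0 : PS P x (subtree lab (take e (lab y))) = 0.
  by apply/eqP; rewrite eq_le PS_ge0 andbT leNgt h.
rewrite h0 mul0r; apply/eqP; rewrite eq_le PS_ge0 /= -h0.
rewrite -(children_sum (take e (lab y)) x) ?sz //.
rewrite (bigD1 (nth x0 (lab y) e)) //= lerDl.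
by apply: sumr_ge0 => i _; apply: PS_ge0.
Qed.

Lemma path_prod x y :
  \prod_(d < m) Pv lab P D x (take d (lab y)) (tnth (lab y) d) = P x y.
Proof.
rewrite (eq_bigr (fun d : 'I_m => Pv lab P D x (take d (lab y)) (nth x0 (lab y) d))); last first.
  by move=> d _; rewrite (tnth_nth x0).
rewrite -(big_mkord xpredT (fun d => Pv lab P D x (take d (lab y)) (nth x0 (lab y) d))).
rewrite telescope // /PS (take_oversize (s := lab y)) ?size_tuple //.
rewrite (eq_bigl (fun y' => y' == y)) ?big_pred1_eq // => y'.
rewrite /subtree size_tuple take_oversize ?size_tuple //.
apply/eqP/eqP => [h|-> //]; apply: hlab; exact: val_inj.
Qed.
End TreeLemmas.

Theorem theorem2 (R : realFieldType) (X : Type) (t m n : nat)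
    (ht : (1 <= t)%N) (hm : (1 <= m)%N) (hn : n = ((2 ^ t) ^ m)%N)
    (lab : 'I_n -> m.-tuple 'I_(2 ^ t)) (hlab : bijective lab)
    (P : X -> 'I_n -> R)
    (hP0 : forall x y, 0 <= P x y)
    (hP1 : forall x, \sum_(y < n) P x y = 1)
    (D : seq 'I_(2 ^ t) -> X -> 'I_(2 ^ t) -> R)
    (hD0 : forall v x j, (size v < m)%N -> 0 <= D v x j)
    (hD1 : forall v x, (size v < m)%N -> \sum_(j < 2 ^ t) D v x j = 1)
    (r : seq 'I_(2 ^ t) -> 'I_(2 ^ t) -> X -> R)
    (hr : forall v (i : 'I_(2 ^ t)) x, (size v < m)%N -> (i : nat) != 0%N ->
            0 <= r v i x <= 1)
    (x : X) (y : 'I_n) :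
  (Q lab r x y - P x y) ^+ 2 <=
    4 * m%:R ^+ 2 * (((2 ^ t)%:R - 1) / (2 ^ t)%:R) ^+ 2
      * eps2 lab r P D x y.
Proof.
have injl : injective lab by apply: bij_inj.
have hv (d : 'I_m) : (size (take d (lab y)) < m)%N.
  by rewrite size_takel ?size_tuple // ltnW.
set c := 2 * (1 / (2 ^ t)%:R) : R.
have c0 : 0 <= c by rewrite mulr_ge0 // divr_ge0.
pose e (d : 'I_m) (i : 'I_(2 ^ t)) :=
  r (take d (lab y)) i x - PvS lab P D x (take d (lab y)) (Yset i).
pose E d := \sum_(i < 2 ^ t | (i : nat) != 0%N) `|e d i|.
have node (d : 'I_m) :
  `|Qv r x (take d (lab y)) (tnth (lab y) d)
    - Pv lab P D x (take d (lab y)) (tnth (lab y) d)| <= c * E d.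
  rewrite /Qv.
  have hg (i : 'I_(2 ^ t)) : (i : nat) = 0%N -> reg r (take d (lab y)) i x = 1.
    by move=> hi; rewrite /reg hi.
  apply: le_trans (node_err _ _ _ (fun i => reg r (take d (lab y)) i x)
     (Pv_sum1 _ _ _ _ _ lab P D hD1 x _ (hv d)) hg _) _.
  rewrite le_eqVlt; apply/orP; left; apply/eqP; congr (_ * _).
  by apply: eq_bigr => i hi; rewrite /reg (negbTE hi).
have step1 : `|Q lab r x y - P x y| <= c * \sum_d E d.
  rewrite /Q -{1}(path_prod _ _ _ _ _ lab P hP0 D hP1 injl x y) mulr_sumr.
  have hq (d : 'I_m) : `|Qv r x (take d (lab y)) (tnth (lab y) d)| <= 1.
    apply: q_bound => i; rewrite /reg.
    case: eqP => [_|/eqP hi]; first by rewrite ler01 lexx.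
    exact: hr.
  have hpp (d : 'I_m) : `|Pv lab P D x (take d (lab y)) (tnth (lab y) d)| <= 1.
    rewrite ger0_norm; first exact: (Pv_le1 _ _ _ _ _ lab P hP0 D hD0 hD1 x _ _ (hv d)).
    exact: (Pv_ge0 _ _ _ _ _ lab P hP0 D hD0 x _ _ (hv d)).
  apply: le_trans (prod_diff _ _ _ _ _ hq hpp) _.
  by apply: ler_sum => d _; exact: node.
pose S d := \sum_(i < 2 ^ t | (i : nat) != 0%N) e d i ^+ 2.
have hE : eps2 lab r P D x y = 1 / ((2 ^ t)%:R - 1) / m%:R * \sum_d S d.
  by rewrite /eps2 invfM mulrA.
have card1 : \sum_(i < 2 ^ t | (i : nat) != 0%N) (1 : R) = (2 ^ t)%:R - 1.
  have : \sum_(i < 2 ^ t) (1 : R) = (2 ^ t)%:R by rewrite sumr_const card_ord.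
  rewrite (bigD1 (Ordinal (k_gt0 t))) //= => h.
  have -> : \sum_(i < 2 ^ t | (i : nat) != 0%N) (1 : R)
     = \sum_(i < 2 ^ t | i != Ordinal (k_gt0 t)) 1 by apply: eq_bigl.
  by rewrite -h addrC addrK.
have step2 : (Q lab r x y - P x y) ^+ 2 <= c ^+ 2 * (\sum_d E d) ^+ 2.
  rewrite -real_normK ?num_real // -exprMn !expr2.
  by apply: ler_pM => //; exact: normr_ge0.
have step3 : (\sum_d E d) ^+ 2 <= m%:R * \sum_d E d ^+ 2.
  have := cs _ _ predT E.
  by rewrite sumr_const card_ord.
have step4 d : E d ^+ 2 <= ((2 ^ t)%:R - 1) * S d.
  have := cs _ _ (fun i : 'I_(2 ^ t) => (i : nat) != 0%N) (fun i => `|e d i|).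
  rewrite card1 -/(E d) => h; apply: le_trans h _.
  rewrite le_eqVlt; apply/orP; left; apply/eqP; congr (_ * _).
  by apply: eq_bigr => i _; rewrite real_normK ?num_real.
have step5 : (Q lab r x y - P x y) ^+ 2
    <= c ^+ 2 * (m%:R * (((2 ^ t)%:R - 1) * \sum_d S d)).
  apply: le_trans step2 _; apply: ler_wpM2l; first exact: sqr_ge0.
  apply: le_trans step3 _; apply: ler_wpM2l => //; rewrite mulr_sumr.
  by apply: ler_sum => d _; exact: step4.
apply: le_trans step5 _; rewrite hE.
have K2 : (2 <= 2 ^ t)%N by rewrite -{1}(expn1 2) leq_pexp2l.
have a0 : ((2 ^ t)%:R - 1 : R) != 0.
  by rewrite subr_eq0 -(mulr1n 1) eqr_nat gtn_eqF.
have M0 : (m%:R : R) != 0 by rewrite pnatr_eq0 -lt0n.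
set a := (2 ^ t)%:R - 1 : R; set M := m%:R : R; set K := (2 ^ t)%:R : R.
set SS := \sum_d S d.
rewrite /c !mul1r !mulrA exprMn -/K.
set u := K^-1.
rewrite [_ * u * a^-1]mulrAC mulfK //.
rewrite [_ * u * M^-1]mulrAC [_ * u * M^-1]mulrAC [_ * a * M^-1]mulrAC mulfK //.
rewrite le_eqVlt; apply/orP; left; apply/eqP; congr (_ * SS).
rewrite -natrX expr2 -!mulrA; congr (_ * _).
by rewrite mulrA [RHS]mulrA [RHS]mulrC.
Qed.
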